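(* Let $\mathcal K\in\mathbb N^+$ and $\psi\in(0,1/2]$ be such that $\psi\mathcal K$ is a positive integer, and let $\delta\in(0,1)$. Consider independent samples, each uniform among $\mathcal K$ coupon types. With probability at least $1-\delta$, the number of samples needed to collect all but $\psi\mathcal K$ of the coupon types (that is, to see $\mathcal K(1-\psi)$ distinct types) is at most $$\mathcal K\ln\psi^{-1}+\psi^{-1}\ln\delta^{-1}+\sqrt{2\mathcal K\psi^{-1}\ln\psi^{-1}\ln\delta^{-1}}=O\!\left(\mathcal K\ln\psi^{-1}+\psi^{-1}\ln\delta^{-1}\right).$$ *)

(* Defs.v *)
From Stdlib Require Import Reals.
From mathcomp Require Import ssreflect ssrfun ssrbool eqtype ssrnat seq choice fintype finfun finset.

Definition distinct_seen (K T : nat) (s : {ffun 'I_T -> 'I_K}) : nat :=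
  #|[set s i | i : 'I_T]|.

(* Probability, under T i.i.d. uniform samples among K types (i.e. the
   uniform distribution on {ffun 'I_T -> 'I_K}), that at least K - m
   distinct types have been seen among the first T samples, i.e. that the
   number of samples needed to collect all but m types is at most T. *)
Definition collect_prob (K T m : nat) : R :=
  (INR #|[set s : {ffun 'I_T -> 'I_K} | (K - m <= distinct_seen K T s)%N]|
   / INR #|{ffun 'I_T -> 'I_K}|)%R.

Definition coupon_bound (K : nat) (psi delta : R) : R :=
  (INR K * ln (/ psi) + / psi * ln (/ delta)
   + sqrt (2 * INR K * / psi * ln (/ psi) * ln (/ delta)))%R.

(* Main.v *)
Require Import Defs.
From Stdlib Require Import Reals Lra.
From mathcomp Require Import ssreflect ssrfun ssrbool eqtype ssrnat seq choice fintype finfun finset.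
From Coquelicot Require Import Coquelicot.

Module Ana.
Local Open Scope R_scope.


Lemma mono0 (f df : R -> R) (y : R) : 0 <= y ->
  (forall x, 0 <= x <= y -> is_derive f x (df x)) ->
  (forall x, 0 <= x <= y -> 0 <= df x) -> f 0 <= f y.
Proof.
move=> y0 Hd Hp.
have H1 : forall x, Rmin 0 y < x < Rmax 0 y -> is_derive f x (df x).
  move=> x; rewrite Rmin_left ?Rmax_right; try lra.
  move=> Hx; apply Hd; lra.
have H2 : forall x, Rmin 0 y <= x <= Rmax 0 y -> continuity_pt f x.
  move=> x; rewrite Rmin_left ?Rmax_right; try lra.
  move=> Hx; apply/continuity_pt_filterlim; apply: ex_derive_continuous; exists (df x); apply Hd; lra.
have [c [Hc Hf]] := MVT_gen f 0 y df H1 H2.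
move: Hc; rewrite Rmin_left ?Rmax_right; try lra.
move=> Hc.
suff : 0 <= f y - f 0 by lra.
rewrite Hf.
apply Rmult_le_pos; [apply Hp; lra | lra].
Qed.

Lemma exp_taylor2 (x : R) : 0 <= x -> 1 + x + x^2/2 <= exp x.
Proof.
move=> x0.
pose g := fun u => exp u - (1 + u + u^2/2).
suff : g 0 <= g x by rewrite /g exp_0; lra.
apply: (mono0 g (fun u => exp u - (1 + u))) => //.
- move=> u _; rewrite /g; auto_derive; first done. field.
- move=> u _; have := exp_ineq1_le u; lra.
Qed.

Lemma ln_ge (x : R) : 0 < x -> 1 - / x <= ln x.
Proof.
move=> x0.
have h : ln (/ x) <= / x - 1.
  have := exp_ineq1_le (/ x - 1).
  have xi : 0 < / x by apply Rinv_0_lt_compat.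
  move=> H; rewrite -(ln_exp (/ x - 1)); apply: ln_le => //; lra.
rewrite ln_Rinv in h => //; lra.
Qed.

Lemma exp_le' (x y : R) : x <= y -> exp x <= exp y.
Proof.
move=> /Rle_lt_or_eq_dec [h|->]; last lra.
by apply: Rlt_le; apply: exp_increasing.
Qed.

Lemma key_A (q y : R) : 0 < q < 1 -> 0 <= y ->
  q * (y - (1 - q) * ln (1 + y / (1 - q))) <=
  q * y - (1 - q) * ln ((1 - q * exp (- y)) / (1 - q)).
Proof.
move=> [q0 q1] y0.
set c := 1 - q.
have c0 : 0 < c by rewrite /c; lra.
pose g := fun u => q * u - c * ln ((1 - q * exp (- u)) / c)
                   - q * (u - c * ln (1 + u / c)).
suff : g 0 <= g y.
  rewrite /g Ropp_0 exp_0 Rmult_1_r /Rdiv Rmult_0_l Rplus_0_r Rinv_r; last lra.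
  rewrite ln_1; lra.
have wpos : forall u, 0 <= u -> 0 < exp (- u) <= 1.
  move=> u u0; split; first by apply exp_pos.
  rewrite -exp_0; apply: exp_le'; lra.
apply: (mono0 g (fun u => q * c * (1 - exp (- u) - exp (- u) * u)
                        / ((1 - q * exp (- u)) * (c + u)))) => //.
- move=> u [u0 _]; have [w0 w1] := wpos u u0.
  have h1 : 0 < 1 - q * exp (- u) by nra.
  rewrite /g; auto_derive.
    have ci := Rinv_0_lt_compat c c0.
    split; first by apply: Rmult_lt_0_compat; lra.
    split => //; nra.
  rewrite /c; field; repeat split; try lra.
- move=> u [u0 _]; have [w0 w1] := wpos u u0.
  have h1 : 0 < 1 - q * exp (- u) by nra.
  have h2 : 0 <= 1 - exp (- u) - exp (- u) * u.
    have := exp_ineq1_le u.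
    have e : exp (- u) * exp u = 1 by rewrite -exp_plus Rplus_opp_l exp_0.
    nra.
  apply: Rmult_le_pos; first by apply: Rmult_le_pos; [nra | lra].
  apply: Rlt_le; apply: Rinv_0_lt_compat; nra.
Qed.

Lemma key_B (c L z : R) : 0 < c -> c <= L -> 0 <= z ->
  c * ln (1 + (z + sqrt (2 * L * z)) / c) <= sqrt (2 * L * z).
Proof.
move=> c0 cL z0.
have Lz : 0 <= 2 * L * z by nra.
set r := sqrt (2 * L * z).
have r0 : 0 <= r by apply: sqrt_pos.
have r2 : r * r = 2 * L * z by apply: sqrt_sqrt.
have ci := Rinv_0_lt_compat c c0.
have hx : 1 + (z + r) / c <= 1 + r / c + (r / c) ^ 2 / 2.
  have : z / c <= (r / c) ^ 2 / 2.
    rewrite /Rdiv; simpl.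
    have : z * c <= L * z by nra.
    move=> h.
    have e : r * / c * (r * / c * 1) * / 2 = (2 * L * z) * (/ c * / c) / 2.
      by rewrite -r2; field; lra.
    rewrite e.
    apply: (Rmult_le_reg_r (c * c)); first nra.
    have e2 : 2 * L * z * (/ c * / c) / 2 * (c * c) = L * z by field; lra.
    have e3 : z * / c * (c * c) = z * c by field; lra.
    rewrite e2 e3; lra.
  rewrite /Rdiv; lra.
have hpos : 0 < 1 + (z + r) / c.
  have : 0 <= (z + r) / c by apply: Rmult_le_pos; lra.
  lra.
have : ln (1 + (z + r) / c) <= r / c.
  rewrite -[X in _ <= X](ln_exp (r / c)); apply: ln_le => //.
  apply: Rle_trans hx _; apply: exp_taylor2.
  by apply: Rmult_le_pos; lra.
move=> h.
have : c * ln (1 + (z + r) / c) <= c * (r / c) by apply: Rmult_le_compat_l; lra.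
have -> : c * (r / c) = r by field; lra.
done.
Qed.

End Ana.
Import Ana.

From mathcomp Require Import bigop order ssralg ssrnum Rstruct.
Import GRing.Theory Num.Theory.
From mathcomp Require Import zify.
Import Order.TTheory.


Section Comb.
Local Open Scope ring_scope.
Variables (K T m : nat).

Definition img (s : {ffun 'I_T -> 'I_K}) : {set 'I_K} := [set s i | i : 'I_T].

Lemma prod_unseen (t : R) (s : {ffun 'I_T -> 'I_K}) :
  \prod_(i : 'I_K) ((i \notin img s)%:R * t + 1) = (1 + t) ^+ #|~: img s|.
Proof.
rewrite (bigID (fun i => i \in img s)) /=.
rewrite big1 ?mul1r; last by move=> i ->; rewrite /= mul0r add0r.
rewrite -prodr_const; apply: eq_big => [i|i]; first by rewrite !inE.
by move=> ->; rewrite mul1r addrC.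
Qed.

Lemma prod_expand (t : R) (s : {ffun 'I_T -> 'I_K}) :
  \prod_(i : 'I_K) ((i \notin img s)%:R * t + 1) =
  \sum_(J : {set 'I_K}) ([disjoint J & img s])%:R * t ^+ #|J|.
Proof.
rewrite bigA_distr; apply: eq_bigr => J _.
rewrite -big_mkcond /= big_split /= prodr_const.
congr (_ * _).
case: (boolP [disjoint J & img s]) => [dis|ndis].
  apply: big1 => i iJ.
  by have -> : i \notin img s by rewrite (disjointFr dis iJ).
case/pred0Pn: ndis => i /andP[iJ iI].
rewrite (bigD1 i) //=. have iI' : i \in img s := iI. by rewrite iI' mul0r.
Qed.

Lemma count_disjoint (J : {set 'I_K}) :
  #|[set s : {ffun 'I_T -> 'I_K} | [disjoint J & img s]]| = ((K - #|J|) ^ T)%N.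
Proof.
have -> : [set s : {ffun 'I_T -> 'I_K} | [disjoint J & img s]] =
          [set s in ffun_on (mem (~: J))].
  apply/setP => s; rewrite !inE.
  apply/idP/idP.
    move=> dis; apply/ffun_onP => x; rewrite inE.
    by rewrite (disjointFl dis) //; apply/imsetP; exists x.
  move/ffun_onP => H; apply/pred0P => i /=.
  apply/negbTE/andP => -[iJ /imsetP [x _ eq_i]].
  by have := H x; rewrite inE -eq_i iJ.
rewrite cardsE card_ffun_on card_ord.
have := cardsC J; rewrite card_ord => HK.
have e : (K - #|J| = #|~: J|)%N by move: HK; move: (#|J|) (#|~: J|) => a b <-; rewrite addKn.
by rewrite e.
Qed.


Lemma sum_pow_sets (x : R) :
  \sum_(J : {set 'I_K}) x ^+ #|J| = (x + 1) ^+ K.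
Proof.
have := @bigA_distr R 0 1 *%R +%R _ (fun _ : 'I_K => x) (fun _ => 1).
rewrite /= prodr_const card_ord => ->; apply: eq_bigr => J _.
by rewrite -big_mkcond /= prodr_const.
Qed.

Lemma comb (t p : R) : 0 <= t -> 0 <= p -> (m < K)%N ->
  (forall j, (j <= K)%N -> ((K - j)%:R ^+ T <= K%:R ^+ T * p ^+ j)) ->
  #|[set s : {ffun 'I_T -> 'I_K} | ~~ (K - m <= distinct_seen K T s)%N]|%:R
    * (1 + t) ^+ m.+1 <= K%:R ^+ T * (1 + t * p) ^+ K.
Proof.
move=> t0 p0 mK Hj.
set F := [set s : {ffun 'I_T -> 'I_K} | _].
apply: (@le_trans _ _ (\sum_(s in F) (1 + t) ^+ #|~: img s|)).
  rewrite mulr_natl -sumr_const; apply: ler_sum => s; rewrite inE => Hs.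
  apply: ler_weXn2l; first by rewrite lerDl.
  have := cardsC (img s); rewrite card_ord.
  move: Hs; rewrite /distinct_seen -/(img s).
  move: (#|img s|) (#|~: img s|) => a b. lia.
apply: (@le_trans _ _ (\sum_s (1 + t) ^+ #|~: img s|)).
  rewrite [X in _ <= X](bigID (fun s => s \in F)) /= lerDl.
  by apply: sumr_ge0 => s _; apply: exprn_ge0; rewrite addr_ge0.
under eq_bigr => s _ do rewrite -prod_unseen prod_expand.
rewrite exchange_big /=.
under eq_bigr => J _ do rewrite -big_distrl /=.
rewrite mulrC (addrC 1 (t * p)) -sum_pow_sets big_distrl /=.
apply: ler_sum => J _.
have -> : \sum_s ([disjoint J & img s])%:R =
    (#|[set s : {ffun 'I_T -> 'I_K} | [disjoint J & img s]]|)%:R :> R.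
  rewrite -sum1_card natr_sum [in RHS]big_mkcond /=; apply: eq_bigr => s _.
  by rewrite inE; case: [disjoint _ & _].
rewrite count_disjoint natrX.
have -> : (t * p) ^+ #|J| * K%:R ^+ T = t ^+ #|J| * (K%:R ^+ T * p ^+ #|J|).
  by rewrite exprMn -mulrA (mulrC (p ^+ _)).
rewrite [X in X <= _]mulrC; apply: ler_wpM2l; first by apply: exprn_ge0.
apply: Hj.
by have := max_card (mem J); rewrite card_ord.
Qed.

End Comb.

Lemma comb_R (K T m : nat) (t p : R) : Rle 0 t -> Rle 0 p -> (m < K)%N ->
  (forall j, (j <= K)%N -> Rle (pow (INR (K - j)) T) (Rmult (pow (INR K) T) (pow p j))) ->
  Rle (Rmult (INR #|[set s : {ffun 'I_T -> 'I_K} | ~~ (K - m <= distinct_seen K T s)%N]|)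
         (pow (Rplus R1 t) m.+1))
      (Rmult (pow (INR K) T) (pow (Rplus R1 (Rmult t p)) K)).
Proof.
move=> t0 p0 mK Hj; apply/RleP; rewrite !RpowE !INRE.
apply: comb => //; try by apply/RleP.
move=> j hj; have := Hj j hj; rewrite !RpowE !INRE => /RleP //.
Qed.

Lemma INR_expn (a n : nat) : INR (a ^ n)%N = pow (INR a) n.
Proof. by rewrite RpowE !INRE natrX. Qed.

Delimit Scope R_scope with R.
Local Open Scope R_scope.

Lemma exp_pow (x : R) (n : nat) : exp x ^ n = exp (INR n * x).
Proof.
elim: n => [|n IH]; first by rewrite /= Rmult_0_l exp_0.
by rewrite S_INR /= IH -exp_plus; congr exp; ring.
Qed.

Lemma le_of_ln (a b : R) : 0 < a -> 0 < b -> ln a <= ln b -> a <= b.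
Proof.
move=> a0 b0 h; rewrite -(exp_ln a) // -(exp_ln b) //; exact: exp_le'.
Qed.

Lemma finish (K T m : nat) (delta : R) : (0 < K)%N ->
  INR #|[set s : {ffun 'I_T -> 'I_K} | ~~ (K - m <= distinct_seen K T s)%N]|
    <= delta * INR K ^ T ->
  1 - delta <= collect_prob K T m.
Proof.
move=> K0 hF; rewrite /collect_prob.
set S := [set s : {ffun 'I_T -> 'I_K} | (K - m <= distinct_seen K T s)%N].
have eF : [set s : {ffun 'I_T -> 'I_K} | ~~ (K - m <= distinct_seen K T s)%N] = ~: S.
  by apply/setP => s; rewrite !inE.
rewrite eF in hF.
have hc := cardsC S.
rewrite card_ffun !card_ord in hc *.
have hc' : INR #|S| + INR #|~: S| = INR K ^ T by rewrite -plus_INR -INR_expn; congr INR.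
have A0 : 0 < INR K ^ T.
  apply: pow_lt; apply: lt_0_INR; lia.
rewrite INR_expn.
apply: (Rmult_le_reg_r (INR K ^ T)) => //.
rewrite /Rdiv Rmult_assoc Rinv_l; lra.
Qed.

Theorem mainTheorem8 (K m T : nat) (psi delta : R) :
  (0 < K)%N ->
  (0 < psi)%R -> (psi <= 1 / 2)%R ->
  (0 < m)%N -> (psi * INR K)%R = INR m ->
  (0 < delta)%R -> (delta < 1)%R ->
  (INR T <= coupon_bound K psi delta < INR T + 1)%R ->
  (1 - delta <= collect_prob K T m)%R.
Proof.
move=> K0 psi0 psi12 m0 hpsi d0 d1 [hT1 hT2].
apply: finish => //.
set F := [set s : {ffun 'I_T -> 'I_K} | _].
have Kr0 : 0 < INR K by apply: lt_0_INR; lia.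
have mr1 : 1 <= INR m by apply: (le_INR 1); lia.
have hmK : 2 * INR m <= INR K by nra.
have m2K : (2 * m <= K)%N.
  apply/ssrnat.leP; apply: INR_le; rewrite mult_INR; simpl (INR 2); lra.
have hA0 : 0 <= delta * INR K ^ T.
  apply: Rmult_le_pos; [lra | apply: pow_le; lra].
have Linv : / psi = INR K / INR m.
  rewrite -hpsi; field; lra.
have Dpos : 0 < ln (/ delta).
  rewrite -ln_1; apply: ln_increasing; first lra.
  rewrite -Rinv_1; apply: Rinv_lt_contravar; lra.
have Lpos : 0 < ln (/ psi).
  rewrite -ln_1; apply: ln_increasing; first lra.
  rewrite -Rinv_1; apply: Rinv_lt_contravar; lra.
have sq0 := sqrt_pos (2 * INR K * / psi * ln (/ psi) * ln (/ delta)).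
have ip0 : 0 < / psi by apply: Rinv_0_lt_compat.
have Dp0 : 0 <= / psi * ln (/ delta) by nra.
move: hT1 hT2; rewrite /coupon_bound => hT1 hT2.
case: (ltngtP m.+1 K) => [mK|mK|mK]; last first.
- (* K = m + 1, hence K = 2, m = 1 *)
  have eK : K = 2%N by lia.
  have em : m = 1%N by lia.
  have T1 : (0 < T)%N.
    have hl : INR K * ln (/ psi) >= 1.
      have ep : / psi = 2 by rewrite Linv eK em /=; field.
      rewrite ep eK /=; have := ln_lt_2; lra.
    have : 0 < INR T by lra.
    move=> h; apply/ssrnat.ltP; apply: INR_lt; simpl; lra.
  suff -> : F = set0 by rewrite cards0 /=; lra.
  apply/setP => s; rewrite !inE; apply/negbTE; rewrite negbK /distinct_seen.
  have -> : (K - m = 1)%N by lia.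
  rewrite card_gt0; apply/set0Pn.
  by exists (s (Ordinal T1)); apply/imsetP; exists (Ordinal T1).
- lia.
pose kr := INR m + 1.
have hkK : kr < INR K.
  have := lt_INR _ _ (ssrnat.ltP mK); rewrite S_INR.
  by rewrite /kr.
pose q := kr / INR K.
have q0 : 0 < q by apply: Rdiv_lt_0_compat; rewrite /kr; lra.
have q1 : q < 1.
  rewrite /q; apply: (Rmult_lt_reg_r (INR K)) => //.
  rewrite /Rdiv Rmult_assoc Rinv_l; lra.
have Kq : INR K * q = kr by rewrite /q; field; lra.
have psiE : psi = INR m / INR K by rewrite -hpsi; field; lra.
pose L := ln (/ psi).
pose D := ln (/ delta).
pose z := D / INR m.
have z0 : 0 <= z by apply: Rlt_le; apply: Rdiv_lt_0_compat; rewrite /D; lra.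
have Dz : D = INR m * z by rewrite /z; field; lra.
pose r := sqrt (2 * L * z).
pose y := z + r.
have r0 : 0 <= r by apply: sqrt_pos.
have yE : y = z + r by [].
have y0 : 0 <= y by rewrite /y; lra.
have cL : 1 - q <= L.
  have h := ln_ge (/ psi) ip0; rewrite Rinv_inv in h.
  have : psi <= q.
    rewrite psiE /q /Rdiv; apply: Rmult_le_compat_r; last by rewrite /kr; lra.
    by apply: Rlt_le; apply: Rinv_0_lt_compat.
  rewrite /L; lra.
have HB := key_B (1 - q) L z ltac:(lra) cL z0.
rewrite -/r -/y in HB.
have HA := key_A q y (conj q0 q1) y0.
set G := ln (1 + y / (1 - q)) in HA HB.
set l := ln ((1 - q * exp (- y)) / (1 - q)) in HA.
have HD : D <= INR K * (q * y - (1 - q) * l).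
  have h1 : INR K * (q * (y - (1 - q) * G)) <= INR K * (q * y - (1 - q) * l).
    by apply: Rmult_le_compat_l; lra.
  have h2 : INR K * (q * (y - (1 - q) * G)) = kr * (y - (1 - q) * G) by rewrite -Kq; ring.
  have h3 : INR m * z <= kr * (y - (1 - q) * G).
    have : INR m * z <= INR m * (y - (1 - q) * G) by apply: Rmult_le_compat_l; lra.
    have : INR m * (y - (1 - q) * G) <= kr * (y - (1 - q) * G).
      by apply: Rmult_le_compat_r; rewrite /kr; lra.
    lra.
  lra.
have HT : y - ln q <= INR T / INR K.
  have e1 : / psi * ln (/ delta) = INR K * z.
    rewrite /z /D Linv; move: (INR K) (INR m) (ln (/ delta)) mr1 => a b w hb; field; lra.
  have e2 : sqrt (2 * INR K * / psi * ln (/ psi) * ln (/ delta)) = INR K * r.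
    have -> : 2 * INR K * / psi * ln (/ psi) * ln (/ delta) =
              (INR K * INR K) * (2 * L * z).
      by rewrite /z /D -/L Linv; field; lra.
    rewrite sqrt_mult ?sqrt_square; try nra.
    have hL : 0 <= L by rewrite /L; lra.
    done.
  have hl : L + ln q = ln (kr / INR m).
    have kr0 : 0 < kr by rewrite /kr; lra.
    rewrite /L Linv -ln_mult; first by congr ln; rewrite /q; field; lra.
      by apply: Rdiv_lt_0_compat; lra.
    done.
  have e3 : 1 <= INR K * (L + ln q).
    rewrite hl.
    have kr0 : 0 < kr by rewrite /kr; lra.
    have h := ln_ge (kr / INR m) ltac:(apply: Rdiv_lt_0_compat; lra).
    have h4 : 1 - / (kr / INR m) = / kr by rewrite /kr; field; lra.
    rewrite h4 in h.
    have h5 : INR K * / kr = 1 + (INR K - kr) / kr by field; lra.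
    have h6 : 0 <= (INR K - kr) / kr.
      by apply: Rmult_le_pos; [lra | apply: Rlt_le; apply: Rinv_0_lt_compat].
    have : INR K * / kr <= INR K * ln (kr / INR m) by apply: Rmult_le_compat_l; lra.
    lra.
  rewrite e1 e2 -/L in hT2.
  apply: (Rmult_le_reg_r (INR K)) => //.
  rewrite /Rdiv Rmult_assoc Rinv_l ?Rmult_1_r; last lra.
  have : (y - ln q) * INR K = INR K * z + INR K * r - INR K * ln q by rewrite yE; ring.
  have : INR K * (L + ln q) = INR K * L + INR K * ln q by ring.
  lra.
pose p := q * exp (- y).
have p0 : 0 <= p by apply: Rlt_le; apply: Rmult_lt_0_compat => //; apply: exp_pos.
have Hp : exp (- (INR T / INR K)) <= p.
  rewrite /p -(exp_ln q) // -exp_plus; apply: exp_le'; lra.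
have Hj : forall j, (j <= K)%N -> pow (INR (K - j)) T <= pow (INR K) T * pow p j.
  move=> j hj.
  rewrite minus_INR; last by apply/ssrnat.leP.
  pose a := exp (- / INR K).
  have hjK : INR j <= INR K by apply: le_INR; apply/ssrnat.leP.
  have h1 : INR K - INR j <= INR K * a ^ j.
    rewrite /a exp_pow.
    have := exp_ineq1_le (INR j * - / INR K).
    have e : INR K * (1 + INR j * - / INR K) = INR K - INR j by field; lra.
    move=> h; rewrite -e; apply: Rmult_le_compat_l; lra.
  have h2 : (INR K - INR j) ^ T <= (INR K * a ^ j) ^ T by apply: pow_incr; lra.
  rewrite Rpow_mult_distr -pow_mult Nat.mul_comm pow_mult in h2.
  have h3 : a ^ T <= p.
    rewrite /a exp_pow; apply: Rle_trans Hp.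
    apply: exp_le'; apply: Req_le; field; lra.
  have h4 : (a ^ T) ^ j <= p ^ j.
    apply: pow_incr; split => //; apply: pow_le; apply: Rlt_le; apply: exp_pos.
  apply: Rle_trans h2 _.
  apply: Rmult_le_compat_l => //; apply: pow_le; lra.
pose t := (exp y - 1) / (1 - q).
have t0 : 0 <= t.
  apply: Rmult_le_pos; last by apply: Rlt_le; apply: Rinv_0_lt_compat; lra.
  have := exp_ineq1_le y; lra.
have Hc := comb_R K T m t p t0 p0 ltac:(lia) Hj.
rewrite -/F in Hc.
have ey0 : 0 < exp y := exp_pos y.
have eyi : exp (- y) = / exp y by rewrite exp_Ropp.
pose u := (1 - q * exp (- y)) / (1 - q).
have u0 : 0 < u.
  rewrite /u eyi; apply: Rdiv_lt_0_compat; last lra.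
  have : exp 0 <= exp y by apply: exp_le'.
  rewrite exp_0 => h1.
  have : q * / exp y <= q * 1.
    apply: Rmult_le_compat_l; first lra.
    rewrite -Rinv_1; apply: Rinv_le_contravar; lra.
  lra.
have e1 : R1 + t * p = u.
  rewrite /t /p /u eyi; field; split; lra.
have e2 : R1 + t = exp y * u.
  rewrite /t /u eyi; field; split; lra.
rewrite e1 e2 in Hc.
have key : u ^ K <= delta * (exp y * u) ^ m.+1.
  have pu : 0 < exp y * u by apply: Rmult_lt_0_compat.
  apply: le_of_ln.
  - by apply: pow_lt.
  - by apply: Rmult_lt_0_compat => //; apply: pow_lt.
  rewrite ln_pow // ln_mult //; last by apply: pow_lt.
  have hd : ln delta = - D by rewrite /D ln_Rinv // Ropp_involutive.
  rewrite hd ln_pow // ln_mult // ln_exp (S_INR m) -/kr.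
  have -> : ln u = l by [].
  have : INR K * (q * y - (1 - q) * l) = kr * y - INR K * l + kr * l.
    by rewrite -Kq; ring.
  lra.
have B0 : 0 < (exp y * u) ^ m.+1 by apply: pow_lt; apply: Rmult_lt_0_compat.
have KT0 : 0 <= INR K ^ T by apply: pow_le; lra.
apply: (Rmult_le_reg_r ((exp y * u) ^ m.+1)) => //.
apply: Rle_trans Hc _.
have : INR K ^ T * u ^ K <= INR K ^ T * (delta * (exp y * u) ^ m.+1).
  by apply: Rmult_le_compat_l.
move=> h; apply: Rle_trans h _; right; ring.
Qed.
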